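(* For every $\rho\in\mathbb N$ there exist $\mu,n_0\in\mathbb N$ such that for every upwards closed quasi-bush $B=(T,D,\lambda)$ with no coat hangers and with $n\ge n_0$ leaves, if $\mathrm{wcol}_\mu(B)\le n^{1/\mu}$ and for every $w\in V(T)$ either $|\mathrm{IN}(w,B)|\le n^{1/\mu}$ or $|\mathrm{OUT}(w,B)|\le n^{1/\mu}$, then $\mathrm{wcol}_\rho(G(B))\le n^{1/\rho}$.
   Context: A quasi-bush $B=(T,D,\lambda)$: a rooted tree $T$, a set $D$ of pointers from leaves of $T$ to nodes of $T$ (every leaf points to the root), and $\lambda\colon D\to\{0,1\}$. $v\le_T w$ means $v$ is an ancestor of $w$ (including $v=w$); $T(a)$ is the subtree of descendants of $a$. $G(B)$ is the directed graph on the leaves of $T$ where, for distinct leaves $u,v$ and $w$ the lowest ancestor of $v$ with $(u,w)\in D$, $(u,v)$ is an arc iff $\lambda((u,w))=1$; $w$ is the connection point of $(u,v)$. Quasi-bushes are assumed to represent undirected graphs ($G(B)$ symmetric), and $G(B)$ is identified with the corresponding undirected graph. $B$ is upwards closed if $(u,w)\in D$ and $w'\le_T w$ imply $(u,w')\in D$. A coat hanger is a subtree $T(a)$ such that $a$ is neither the root nor a leaf, and some leaf $v$ has a pointer labeled $1$ to the parent of $a$ but no pointer to any node of $T(a)$. $\mathrm{IN}(w,B)$ (resp. $\mathrm{OUT}(w,B)$) is the set of all $u$ (resp. $v$) such that $w$ is the connection point of some arc $(u,v)$ of $G(B)$. $\mathrm{wcol}_r(H)$ is the minimum over linear orders $\prec$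 of the maximum over $v$ of the number of $u$ such that some path of length at most $r$ from $v$ to $u$ has $u$ as its $\prec$-minimum; $\mathrm{wcol}_\mu(B)$ refers to the Gaifman graph of $B$ (vertex set $V(T)$, edges the tree edges and pointers). *)

(* Defs.v *)
From mathcomp Require Import all_boot.
Set Implicit Arguments. Unset Strict Implicit. Unset Printing Implicit Defensive.

(* A linear order on W is given by an injective rank W -> 'I_#|W|.    *)
(* u is weakly r-reachable from v (w.r.t. rank) if some walk of length *)
(* at most r from v to u has u as its rank-minimum.  (Walks and paths  *)
(* give the same reachability relation.)                               *)
Section WCol.
Variables (W : finType) (e : rel W).

Definition wreach (rank : W -> nat) (r : nat) (v u : W) : bool :=
  [exists k : 'I_r.+1, exists p : k.-tuple W,
     [&& path e v p, last v p == u & all (fun x => rank u <= rank x) (v :: p)]].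

Definition wcol_of_order (rank : W -> nat) (r : nat) : nat :=
  \max_(v : W) #|[set u | wreach rank r v u]|.

(* minimum over all linear orders; #|W| is an upper bound of every cost *)
Definition wcol (r : nat) : nat :=
  \big[minn/#|W|]_(f : {ffun W -> 'I_#|W|} | injectiveb f)
     wcol_of_order (fun x => nat_of_ord (f x)) r.
End WCol.

(* Quasi-bushes.  The rooted tree T on node type V is given by a root  *)
(* and a parent function (par root = root, every node reaches root).   *)
Record qbush (V : finType) := QBush {
  qroot : V;
  qpar  : V -> V;
  qptr  : rel V;            (* (u, w) \in D *)
  qlab  : V -> V -> bool    (* lambda((u, w)) *)
}.

Section QBush.
Variables (V : finType) (B : qbush V).

(* anc v w : v <=_T w, i.e. v is an ancestor of w (including v = w) *)
Definition anc (v w : V) : bool :=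
  [exists k : 'I_#|V|.+1, iter k (qpar B) w == v].

Definition child (a x : V) : bool := (x != qroot B) && (qpar B x == a).

Definition leaf (v : V) : bool := [forall x, ~~ child v x].

Definition is_qbush : Prop :=
  [/\ qpar B (qroot B) = qroot B,
      (forall x, anc (qroot B) x),
      (forall u w, qptr B u w -> leaf u) &
      (forall u, leaf u -> qptr B u (qroot B))].

Definition conn (u v w : V) : bool :=
  [&& anc w v, qptr B u w &
      [forall w', (anc w' v && qptr B u w') ==> anc w' w]].

Definition arc (u v : V) : bool :=
  [&& leaf u, leaf v, u != v & [exists w, conn u v w && qlab B u w]].

(* G(B) represents an undirected graph *)
Definition symmetric_qbush : Prop := forall u v, arc u v = arc v u.

Definition upwards_closed : Prop :=
  forall u w w', qptr B u w -> anc w' w -> qptr B u w'.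

Definition coat_hanger (a : V) : bool :=
  [&& a != qroot B, ~~ leaf a &
      [exists v, [&& qptr B v (qpar B a), qlab B v (qpar B a) &
                     [forall w, anc a w ==> ~~ qptr B v w]]]].

Definition no_coat_hangers : Prop := forall a, ~~ coat_hanger a.

Definition IN (w : V) : {set V} := [set u | [exists v, arc u v && conn u v w]].
Definition OUT (w : V) : {set V} := [set v | [exists u, arc u v && conn u v w]].

Definition leaves : {set V} := [set v | leaf v].

Definition gaif_edge (x y : V) : bool :=
  (x != y) && [|| (x != qroot B) && (qpar B x == y),
                  (y != qroot B) && (qpar B y == x),
                  qptr B x y | qptr B y x].

Definition wcol_qbush (r : nat) : nat := wcol gaif_edge r.

Definition leafT := {x : V | leaf x}.
Definition GB_edge (x y : leafT) : bool := arc (val x) (val y).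

Definition wcol_GB (r : nat) : nat := wcol GB_edge r.
End QBush.

(* Main.v *)
Require Import Defs.
From mathcomp Require Import all_boot zify.
Set Implicit Arguments. Unset Strict Implicit. Unset Printing Implicit Defensive.

Section Tree.
Variables (V : finType) (B : qbush V).
Hypothesis HB : is_qbush B.
Notation par := (qpar B).
Notation root := (qroot B).

Lemma iter_root k : iter k par root = root.
Proof. case: HB => Hr _ _ _; elim: k => //= k ->; exact: Hr. Qed.

Lemma iter_add a b x : iter (a + b) par x = iter a par (iter b par x).
Proof. exact: iterD. Qed.

Lemma periodic_root a p : 0 < p -> iter p par a = a -> a = root.
Proof.
move=> p0 Hp; case: HB => _ Hanc _ _.
have /existsP[m /eqP Hm] := Hanc a.
have Ht : forall t, iter (p * t) par a = a.
  elim=> [|t IH]; first by rewrite muln0.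
  by rewrite mulnS iter_add IH Hp.
have := Ht m; rewrite -(subnK (_ : m <= p * m)); last first.
  by rewrite -{1}[m : nat]mul1n leq_mul2r p0 orbT.
by rewrite iter_add Hm iter_root => <-.
Qed.

Lemma par_neq x : x != root -> par x != x.
Proof.
move=> Hx; apply/eqP=> E; move/eqP: Hx; apply.
exact: (@periodic_root x 1).
Qed.


Lemma conn_par x y w :
  upwards_closed B -> no_coat_hangers B ->
  conn B x y w -> qlab B x w -> w != y -> w = par y.
Proof.
move=> UC NCH /and3P[/existsP[k /eqP Hk] Hxw /forallP Hlow] Hl Hwy.
have Ex : exists j, iter j par y == w by exists k; apply/eqP.
case: (ex_minnP Ex) => j /eqP Hj Hmin.
have jk : j <= k by apply: Hmin; apply/eqP.
case: j Hj Hmin jk => [|j] Hj Hmin jk; first by rewrite -Hj eqxx in Hwy.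
set a := iter j par y.
have Hpa : par a = w by rewrite -Hj.
have Haw : a != w.
  apply/negP=> /eqP E; have := Hmin j; rewrite -/a E eqxx => /(_ isT).
  by rewrite ltnn.
have Hnr : a != root.
  apply/negP=> /eqP E.
  have : par a = a by rewrite E; case: HB.
  by rewrite Hpa => E'; rewrite E' eqxx in Haw.
have Hay : anc B a y.
  apply/existsP; have jV : j < #|V|.+1.
    exact: ltn_trans jk (ltn_ord k).
  by exists (Ordinal jV).
case La : (leaf B a).
  case: j Hj Hmin jk @a Hpa Haw Hnr Hay La => [|j] Hj Hmin jk a Hpa Haw Hnr Hay La.
    by rewrite -Hpa.
  exfalso; move/forallP: La => /(_ (iter j par y)); rewrite /child.
  have -> : par (iter j par y) == a by [].
  rewrite andbT negbK => /eqP E.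
  by move: Hnr; rewrite /a /= E; case: HB => -> _ _ _; rewrite eqxx.
exfalso; move: (NCH a); rewrite /coat_hanger Hnr La /= => /negP; apply.
apply/existsP; exists x; rewrite Hpa Hxw Hl /=.
apply/forallP=> z; apply/implyP=> Haz; apply/negP=> Hxz.
have Hxa : qptr B x a := UC _ _ _ Hxz Haz.
have := Hlow a; rewrite Hay Hxa /= => /existsP[i /eqP Hi].
have : iter i.+1 par a = a by rewrite iterSr Hpa.
by move/(periodic_root (ltn0Sn _)) => E; rewrite E eqxx in Hnr.
Qed.

End Tree.


Lemma gaif_sym (V : finType) (B : qbush V) a b : gaif_edge B a b = gaif_edge B b a.
Proof.
rewrite /gaif_edge eq_sym; congr andb.
by case: (_ && (_ == b)); case: (_ && (_ == a)); case: (qptr _ a b); case: (qptr _ b a).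
Qed.

Lemma root_not_leaf (V : finType) (B : qbush V) x :
  is_qbush B -> x != qroot B -> ~~ leaf B (qroot B).
Proof.
move=> HB Hx; case: (HB) => _ Hanc _ _.
have /existsP[k /eqP Hk] := Hanc x.
have Ex : exists j, iter j (qpar B) x == qroot B by exists k; apply/eqP.
case: (ex_minnP Ex) => j /eqP Hj Hmin.
case: j Hj Hmin => [|j] Hj Hmin; first by move: Hj => /= Hj; rewrite Hj eqxx in Hx.
apply/forallP => /(_ (iter j (qpar B) x)); rewrite /child -Hj eqxx andbT negbK => /eqP E.
by have := Hmin j; rewrite E Hj eqxx ltnn => /(_ isT).
Qed.

Section Main.
Variables (V : finType) (B : qbush V).
Hypothesis HB : is_qbush B.
Hypothesis UC : upwards_closed B.
Hypothesis NCH : no_coat_hangers B.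
Hypothesis Hrl : ~~ leaf B (qroot B).
Variable mu : nat.
Variable L : V -> nat.
Notation par := (qpar B).
Notation root := (qroot B).
Notation leafT := (leafT B).

Definition Pset w := if #|IN B w| ^ mu <= #|leaves B| then IN B w else OUT B w.
Definition cand (x : leafT) w :=
  (w == val x) || ((val x \in Pset w) && gaif_edge B (val x) w).
Definition kn (x : leafT) : V := [arg min_(w < val x | cand x w) L w].

Lemma kn_spec x : cand x (kn x) /\ forall w, cand x w -> L (kn x) <= L w.
Proof. rewrite /kn; case: arg_minnP; first by rewrite /cand eqxx. by move=> w H1 H2; split. Qed.

Lemma leaf_nroot (y : V) : leaf B y -> y != root.
Proof. by move=> Ly; apply/negP=> /eqP E; move: Hrl; rewrite -E Ly. Qed.

Lemma step (x y : leafT) : GB_edge x y -> ~~ gaif_edge B (val x) (val y) ->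
  [/\ gaif_edge B (val x) (par (val y)), gaif_edge B (par (val y)) (val y) &
      minn (L (kn x)) (L (kn y)) <= L (par (val y))].
Proof.
case: x y => [x Lx] [y Ly] /=; rewrite /GB_edge /= => Hxy Hng.
move: (Hxy) => /and4P[_ _ xy /existsP[w /andP[Hc Hl]]].
have yr := leaf_nroot Ly.
have Hw : w = par y.
  apply: (conn_par HB UC NCH Hc Hl); apply/negP=> /eqP E; move: Hng.
  case/and3P: Hc => _ Hp _; by rewrite /gaif_edge xy -E Hp !orbT.
subst w.
have xp : x != par y.
  apply/negP=> /eqP E; move/forallP: Lx => /(_ y); rewrite /child yr -E eqxx.
  by [].
have g1 : gaif_edge B x (par y).
  by case/and3P: Hc => _ Hp _; rewrite /gaif_edge xp Hp !orbT.
have g2 : gaif_edge B (par y) y.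
  by rewrite /gaif_edge (par_neq HB yr) yr eqxx /= orbT.
split => //.
have HIN : x \in IN B (par y) by rewrite inE; apply/existsP; exists y; rewrite Hxy Hc.
have HOUT : y \in OUT B (par y) by rewrite inE; apply/existsP; exists x; rewrite Hxy Hc.
case E: (#|IN B (par y)| ^ mu <= #|leaves B|).
  have C : cand (exist _ x Lx) (par y) by rewrite /cand /Pset E HIN g1 orbT.
  by rewrite geq_min ((kn_spec _).2 _ C).
have C : cand (exist _ y Ly) (par y).
  by rewrite /cand /Pset E HOUT gaif_sym g2 orbT.
by rewrite geq_min ((kn_spec _).2 _ C) orbT.
Qed.

Fixpoint expand (x : leafT) (p : seq leafT) : seq V :=
  if p is y :: p' then
    (if gaif_edge B (val x) (val y) then [:: val y] else [:: par (val y); val y])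
      ++ expand y p'
  else [::].

Lemma exp_path x p : path (@GB_edge V B) x p -> path (gaif_edge B) (val x) (expand x p).
Proof.
elim: p x => //= y p IH x /andP[Hxy Hp].
case: ifP => Hg; rewrite cat_path /= ?Hg IH //.
by case: (step Hxy (negbT Hg)) => -> -> _.
Qed.

Lemma exp_last x p : last (val x) (expand x p) = val (last x p).
Proof. by elim: p x => //= y p IH x; case: ifP => _; rewrite last_cat /= IH. Qed.

Lemma exp_size x p : size (expand x p) <= 2 * size p.
Proof.
elim: p x => //= y p IH x; rewrite size_cat mulnS.
have := IH y; case: ifP => _ /=; lia.
Qed.

Lemma exp_all b x p : path (@GB_edge V B) x p -> all (fun y => b <= L (kn y)) (x :: p) ->
  all (fun z => b <= L z) (expand x p).
Proof.
elim: p x => //= y p IH x /andP[Hxy Hp] /and3P[Hx Hy Hall].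
have Hvy : b <= L (val y).
  apply: leq_trans Hy _; apply: (kn_spec y).2; by rewrite /cand eqxx.
rewrite all_cat IH ?Hy ?andbT //; case: ifP => Hg /=; rewrite Hvy ?andbT //.
case: (step Hxy (negbT Hg)) => _ _; rewrite geq_min => /orP[] H.
  exact: leq_trans Hx H.
exact: leq_trans Hy H.
Qed.

Lemma reach_main rho (r : leafT -> nat) v u :
  2 * rho < mu ->
  (forall x, r u <= r x -> L (kn u) <= L (kn x)) ->
  wreach (@GB_edge V B) r rho v u -> wreach (gaif_edge B) L mu (val v) (kn u).
Proof.
move=> Hmu Hr /existsP[k /existsP[p /and3P[Hp /eqP Hl Hall]]].
set s := expand v p ++ (if kn u == val u then [::] else [:: kn u]).
have Hs : size s < mu.+1.
  rewrite size_cat ltnS; apply: leq_trans (_ : 2 * rho + 1 <= mu); last by rewrite addn1.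
  apply: leq_add; first by apply: leq_trans (exp_size v p) _; rewrite leq_mul2l size_tuple -ltnS ltn_ord orbT.
  by case: ifP.
apply/existsP; exists (Ordinal Hs); apply/existsP; exists (in_tuple s).
have Hall' : all (fun y => L (kn u) <= L (kn y)) (v :: p).
  by apply/allP=> y Hy; apply: Hr; exact: (allP Hall y Hy).
have Hlast : last (val v) (expand v p) = val u by rewrite exp_last Hl.
have [Cu _] := kn_spec u.
apply/and3P; split.
- rewrite cat_path exp_path // Hlast /=; case: ifP => //= Hne.
  by move: Cu; rewrite /cand Hne /= => /andP[_ ->].
- rewrite last_cat Hlast; case: ifP => //= /eqP ->; by [].
- rewrite /= all_cat (exp_all Hp Hall') /=.
  have Hv : L (kn u) <= L (val v).
    apply: leq_trans (allP Hall' v (mem_head _ _)) _.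
    by apply: (kn_spec v).2; rewrite /cand eqxx.
  rewrite Hv /=; by case: ifP => //= _; rewrite leqnn.
Qed.

End Main.


Lemma bigmin_le (I : eqType) (r : seq I) (P : pred I) (F : I -> nat) d i0 :
  i0 \in r -> P i0 -> \big[minn/d]_(i <- r | P i) F i <= F i0.
Proof.
elim: r => // x r IH; rewrite in_cons big_cons; case/orP=> [/eqP<-|H] HP.
  by rewrite HP geq_minl.
case: (P x); last exact: IH.
exact: leq_trans (geq_minr _ _) (IH H HP).
Qed.

Lemma bigmin_cases (I : eqType) (r : seq I) (P : pred I) (F : I -> nat) d :
  \big[minn/d]_(i <- r | P i) F i = d \/
  exists i, P i /\ \big[minn/d]_(i <- r | P i) F i = F i.
Proof.
elim: r => [|x r IH]; first by left; rewrite big_nil.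
set b := \big[minn/d]_(i <- x :: r | P i) F i.
have Eb : b = if P x then minn (F x) (\big[minn/d]_(j <- r | P j) F j)
              else \big[minn/d]_(j <- r | P j) F j by rewrite /b big_cons.
move: Eb; case Px: (P x) => Eb; rewrite Eb //.
case: (leqP (F x) (\big[minn/d]_(j <- r | P j) F j)) => H.
  by right; exists x; split => //; apply/minn_idPl.
exact: IH.
Qed.

Lemma card_bigcup_le (I J : finType) (A : {set I}) (F : I -> {set J}) :
  #|\bigcup_(i in A) F i| <= \sum_(i in A) #|F i|.
Proof.
elim/big_rec2: _ => [|i U s _ Hs]; first by rewrite cards0.
by apply: leq_trans (leq_card_setU _ _).1 _; rewrite leq_add2l.
Qed.

Lemma expn_mono a b e : a <= b -> a ^ e <= b ^ e.
Proof. by move=> H; elim: e => // e IH; rewrite !expnS leq_mul. Qed.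

Lemma arith r g c n : g ^ (4 * r + 1) <= n -> c ^ (4 * r + 1) <= n -> 4 ^ r <= n -> 0 < n ->
  (g * (c + 1)) ^ r <= n.
Proof.
move=> Hg Hc H4 Hn.
case: (posnP g) => [->|g0].
  by case: r {Hg Hc H4} => [|r] //; rewrite mul0n exp0n.
set M := maxn g c.
have M0 : 0 < M by rewrite leq_max g0.
have HM : M ^ (4 * r) <= n.
  apply: leq_trans (_ : M ^ (4 * r + 1) <= n).
    by apply: leq_pexp2l => //; rewrite leq_addr.
  case: (leqP g c) => H.
    by have -> : M = c by apply/maxn_idPr.
  by have -> : M = g by apply/maxn_idPl; exact: ltnW.
have Hgc : g * (c + 1) <= 2 ^ 1 * M ^ 2.
  have : g <= M by rewrite leq_maxl.
  have : c <= M by rewrite leq_maxr.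
  move=> h1 h2; rewrite expn1 -mulnn; nia.
apply: leq_trans (_ : (2 ^ 1 * M ^ 2) ^ r <= n).
  exact: expn_mono.
rewrite expnMn -expnM -expnM -(leq_sqr _ n) expnMn -!expnM.
have -> : 2 ^ (1 * r * 2) = 4 ^ r by rewrite mulnC mul1n expnM.
have -> : 2 * r * 2 = 4 * r by lia.
by rewrite -mulnn leq_mul.
Qed.

Theorem lemma7p36 :
  forall rho : nat, exists mu n0 : nat,
    forall (V : finType) (B : qbush V),
      is_qbush B -> symmetric_qbush B -> upwards_closed B ->
      no_coat_hangers B ->
      n0 <= #|leaves B| ->
      wcol_qbush B mu ^ mu <= #|leaves B| ->
      (forall w : V, #|IN B w| ^ mu <= #|leaves B| \/
                     #|OUT B w| ^ mu <= #|leaves B|) ->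
      wcol_GB B rho ^ rho <= #|leaves B|.
Proof.
move=> rho; exists (4 * rho + 1), (maxn 2 (4 ^ rho)).
move=> V B HB _ UC NCH Hn Hg HIO.
set mu := 4 * rho + 1.
set n := #|leaves B|.
have n2 : 1 < n by apply: leq_trans Hn; rewrite leq_maxl.
have n4 : 4 ^ rho <= n by apply: leq_trans Hn; rewrite leq_maxr.
have Hrl : ~~ leaf B (qroot B).
  case/card_gt1P: n2 => x [y [_ _ xy]].
  case: (eqVneq x (qroot B)) => [Ex|xr]; last exact: root_not_leaf HB xr.
  by apply: (root_not_leaf HB (x := y)); rewrite -Ex eq_sym.
have [f finj fcost] : exists2 f : {ffun V -> 'I_#|V|}, injective f &
    wcol_of_order (gaif_edge B) (fun x => nat_of_ord (f x)) mu <= wcol_qbush B mu.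
  rewrite /wcol_qbush /wcol.
  case: (bigmin_cases (index_enum {ffun V -> 'I_#|V|}) (fun f => injectiveb f)
    (fun f => wcol_of_order (gaif_edge B) (fun x => nat_of_ord (f x)) mu) #|V|) => [E|[f [Hf E]]].
    exists [ffun x => enum_rank x].
      by move=> x y; rewrite !ffunE; exact: enum_rank_inj.
    rewrite E; apply/bigmax_leqP => v _; exact: max_card.
  by exists f; [exact/injectiveP | rewrite E].
pose LT : finType := {x : V | leaf B x}.
set L := fun x => nat_of_ord (f x).
have LV : forall x, L x < #|V| by move=> x; exact: ltn_ord.
have Linj : injective L by move=> x y /ord_inj /finj.
set kn := @kn V B mu L.
set N := #|V|.
set key := fun x : leafT B => L (kn x) * N + L (val x).
have key_inj : injective key.
  move=> x y E; apply: val_inj; apply: Linj.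
  have := congr1 (modn^~ N) E; rewrite /key !modnMDl !modn_small //.
have key_lex : forall x y, L (kn x) < L (kn y) -> key x < key y.
  move=> x y H; rewrite /key; have := LV (val x); rewrite -/N => H2.
  have : (L (kn x)).+1 * N <= L (kn y) * N by rewrite leq_mul2r H orbT.
  nia.
set rank := fun x : leafT B => #|[set y | key y < key x]|.
have rank_lt : forall x, rank x < #|LT|.
  move=> x; rewrite -cardsT; apply: proper_card; apply/properP; split; first exact: subsetT.
  by exists x; rewrite ?inE // ltnn.
have rank_mono : forall x y, key x < key y -> rank x < rank y.
  move=> x y H; apply: proper_card; apply/properP; split.
    by apply/subsetP=> z; rewrite !inE => /ltn_trans; apply.
  by exists x; rewrite !inE ?ltnn.
set fr := [ffun x => Ordinal (rank_lt x)] : {ffun LT -> 'I_#|LT|}.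
have fr_inj : injective fr.
  move=> x y; rewrite !ffunE => /(congr1 val) /= E.
  case: (ltngtP (key x) (key y)) => H.
  - by have := rank_mono _ _ H; rewrite E ltnn.
  - by have := rank_mono _ _ H; rewrite E ltnn.
  - exact: key_inj.
have Hr : forall u x : LT, nat_of_ord (fr u) <= nat_of_ord (fr x) -> L (kn u) <= L (kn x).
  move=> u x; rewrite !ffunE /= => H; rewrite leqNgt; apply/negP => H2.
  by have := rank_mono _ _ (key_lex _ _ H2); rewrite ltnNge H.
set c := \max_(w : V) #|Pset B mu w|.
set g := wcol_qbush B mu.
have Hbound : wcol_GB B rho <= g * (c + 1).
  apply: (@leq_trans (wcol_of_order (@GB_edge V B) (fun x => nat_of_ord (fr x)) rho)).
    rewrite /wcol_GB /wcol; apply: bigmin_le; first exact: mem_index_enum.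
    exact/injectiveP.
  apply/bigmax_leqP => v _.
  set T := [set w | wreach (gaif_edge B) L mu (val v) w].
  have HT : #|T| <= g.
    apply: leq_trans fcost; rewrite /wcol_of_order.
    exact: leq_bigmax.
  apply: (@leq_trans #|\bigcup_(w in T) [set u : LT | val u \in w |: Pset B mu w]|).
    apply: subset_leq_card; apply/subsetP => u; rewrite inE => Hu.
    apply/bigcupP; exists (kn u).
      rewrite inE; apply: (reach_main HB UC NCH Hrl _ (Hr u) Hu).
      rewrite /mu; lia.
    rewrite inE; have [Cu _] := kn_spec mu L u; move: Cu; rewrite /cand.
    case/orP => [/eqP <-|/andP[H _]]; by rewrite !inE ?eqxx ?H ?orbT.
  apply: leq_trans (card_bigcup_le _ _) _.
  apply: (@leq_trans (\sum_(w in T) (c + 1))); last by rewrite sum_nat_const leq_mul2r HT orbT.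
  apply: leq_sum => w _.
  apply: (@leq_trans #|w |: Pset B mu w|).
    rewrite -(card_imset _ val_inj); apply: subset_leq_card; apply/subsetP => z.
    by case/imsetP => u; rewrite inE => Hu ->.
  rewrite cardsU1 addnC leq_add //; last by case: (_ \notin _).
  rewrite /c; exact: leq_bigmax.
have Hc : c ^ mu <= n.
  rewrite /c; elim/big_ind: _ => //.
    by rewrite exp0n // /mu addn1.
    by move=> a b Ha Hb; rewrite /maxn; case: ifP.
  move=> w _; rewrite /Pset; case: ifP => // Hin.
  by case: (HIO w) => //; rewrite Hin.
apply: leq_trans (_ : (g * (c + 1)) ^ rho <= n).
  exact: expn_mono.
apply: arith => //; last by apply: ltnW.
Qed.
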